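(* Let $\alpha\in\mathbb R$. For every $u_0>0$ there exist $R>0$ and $u\in C^2([0,R])$ solving $$\left(\frac{r\,u'(r)}{\sqrt{1+u'(r)^2}}\right)'=\alpha\,\frac{r\,(u-ru')}{(r^2+u^2)\sqrt{1+u'^2}}\quad\text{in }(0,R),\qquad u(0)=u_0,\quad u'(0)=0.$$ Moreover, the solution depends continuously on the parameters $\alpha$ and $u_0$.
   Context: This ODE is the equation for the profile $z=u(r)$, $r=\sqrt{x^2+y^2}$, of a surface of revolution about the $z$-axis satisfying $H=\alpha\langle\nu,p\rangle/|p|^2$ (with $H$ the sum of principal curvatures), meeting the rotation axis orthogonally at $(0,0,u_0)$. *)

(* Defs.v *)
From Stdlib Require Import Reals.
From Coquelicot Require Import Coquelicot.
Open Scope R_scope.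

(* g is the derivative of f on the closed interval [a,b], where at every
   point x of [a,b] the difference quotient is taken with y ranging over
   [a,b] \ {x} (so one-sided derivatives at the endpoints). *)
Definition has_deriv_on_closed (a b : R) (f g : R -> R) : Prop :=
  forall x, a <= x <= b ->
    filterlim (fun y => (f y - f x) / (y - x))
      (within (fun y => a <= y <= b /\ y <> x) (locally x))
      (locally (g x)).

Definition continuous_on_closed (a b : R) (f : R -> R) : Prop :=
  forall x, a <= x <= b ->
    filterlim f (within (fun y => a <= y <= b) (locally x)) (locally (f x)).

Definition C2_on (a b : R) (u u1 u2 : R -> R) : Prop :=
  has_deriv_on_closed a b u u1 /\ has_deriv_on_closed a b u1 u2 /\
  continuous_on_closed a b u2.

Definition rhs (alpha r ur u1r : R) : R :=
  alpha * (r * (ur - r * u1r)) / ((r ^ 2 + ur ^ 2) * sqrt (1 + u1r ^ 2)).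

Definition solves_ode (alpha Rr : R) (u u1 : R -> R) : Prop :=
  forall r, 0 < r < Rr ->
    is_derive (fun s => s * u1 s / sqrt (1 + u1 s ^ 2)) r
      (rhs alpha r (u r) (u1 r)).

Definition jointly_continuous_on (P : R -> R -> Prop) (Rr : R)
    (F : R -> R -> R -> R) : Prop :=
  forall a c r, P a c -> 0 <= r <= Rr ->
  forall eps, 0 < eps -> exists delta, 0 < delta /\
    forall a' c' r', P a' c' -> 0 <= r' <= Rr ->
      Rabs (a' - a) < delta -> Rabs (c' - c) < delta -> Rabs (r' - r) < delta ->
      Rabs (F a' c' r' - F a c r) < eps.

(* Main.v *)
Require Import Defs.
From Stdlib Require Import Reals Lra Psatz.
From Coquelicot Require Import Coquelicot.
Open Scope R_scope.


Lemma lim_half (a K : R) : (forall n, a <= K * (/2)^n) -> a <= 0.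
Proof.
  intros H.
  destruct (Rle_or_lt a 0) as [h|h]; [exact h|exfalso].
  assert (HK : 0 < K).
  { specialize (H 0%nat). simpl in H. lra. }
  destruct (pow_lt_1_zero (/2) ltac:(rewrite Rabs_pos_eq; lra) (a / K))
    as [N HN].
  { apply Rdiv_lt_0_compat; lra. }
  specialize (HN N (le_n _)). specialize (H N).
  rewrite Rabs_pos_eq in HN by (apply pow_le; lra).
  apply Rmult_lt_compat_l with (r := K) in HN; [|lra].
  replace (K * (a / K)) with a in HN by (field; lra). lra.
Qed.

Lemma cont_eps (f : R -> R) x :
  continuity_pt f x ->
  forall eps, 0 < eps -> exists d, 0 < d /\ forall y, Rabs (y - x) < d -> Rabs (f y - f x) < eps.
Proof.
  intros Hc eps Heps.
  destruct (Hc eps Heps) as [d [Hd H]].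
  exists d; split; [lra|]. intros y Hy.
  destruct (Req_dec y x) as [->|Hne].
  - rewrite Rminus_diag, Rabs_R0; lra.
  - apply (H y). split; [split; [exact I| auto]| exact Hy].
Qed.

Lemma eps_cont (f : R -> R) x :
  (forall eps, 0 < eps -> exists d, 0 < d /\ forall y, Rabs (y - x) < d -> Rabs (f y - f x) < eps) ->
  continuity_pt f x.
Proof.
  intros H eps Heps. destruct (H eps Heps) as [d [Hd H']].
  exists d; split; [lra|]. intros y [_ Hy]. apply H'. exact Hy.
Qed.

Lemma within_eps (D : R -> Prop) (f : R -> R) x l :
  (forall eps, 0 < eps -> exists d, 0 < d /\ forall y, D y -> Rabs (y - x) < d -> Rabs (f y - l) < eps) ->
  filterlim f (within D (locally x)) (locally l).
Proof.
  intros H. apply filterlim_locally. intros [eps Heps]. simpl.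
  destruct (H eps Heps) as [d [Hd H']].
  exists (mkposreal d Hd). intros y Hy Dy. apply H'; auto.
Qed.

Lemma deriv_eps (f : R -> R) x l : is_derive f x l ->
  forall eps, 0 < eps -> exists d, 0 < d /\ forall y, y <> x -> Rabs (y - x) < d ->
    Rabs ((f y - f x) / (y - x) - l) < eps.
Proof.
  intros Hd eps Heps. apply is_derive_Reals in Hd.
  destruct (Hd eps Heps) as [d H]. exists d; split; [apply cond_pos|].
  intros y Hne Hy. assert (Hh : y - x <> 0) by lra. specialize (H (y - x) Hh Hy).
  rewrite (Rplus_minus x y) in H. exact H.
Qed.

Lemma deriv_within (D : R -> Prop) (f : R -> R) x l : is_derive f x l ->
  filterlim (fun y => (f y - f x) / (y - x)) (within (fun y => D y /\ y <> x) (locally x)) (locally l).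
Proof.
  intros Hd. apply within_eps. intros eps Heps.
  destruct (deriv_eps f x l Hd eps Heps) as [d [Hd0 H]].
  exists d; split; auto. intros y [_ Hy] Hyd. apply H; auto.
Qed.

Lemma cont_within (D : R -> Prop) (f : R -> R) x : continuity_pt f x ->
  filterlim f (within D (locally x)) (locally (f x)).
Proof.
  intros Hc. apply within_eps. intros eps Heps.
  destruct (cont_eps f x Hc eps Heps) as [d [Hd0 H]].
  exists d; split; auto.
Qed.

Lemma cont_coq (f : R -> R) x : continuity_pt f x -> continuous f x.
Proof. intros H. apply continuity_pt_filterlim. exact H. Qed.

Lemma exRInt_c (f : R -> R) a b : (forall s, continuity_pt f s) -> ex_RInt f a b.
Proof. intros H. apply (@ex_RInt_continuous R_CompleteNormedModule). intros z _. apply cont_coq, H. Qed.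

Lemma int_bound (f : R -> R) c M : 0 <= c -> (forall s, continuity_pt f s) ->
  (forall s, 0 <= s <= c -> Rabs (f s) <= M) -> Rabs (RInt f 0 c) <= c * M.
Proof.
  intros Hc Hf HM. replace c with (c - 0) at 2 by ring.
  apply abs_RInt_le_const; auto. apply exRInt_c; auto.
Qed.

Lemma RInt_sub (f g : R -> R) a b : (forall s, continuity_pt f s) -> (forall s, continuity_pt g s) ->
  RInt f a b - RInt g a b = RInt (fun s => f s - g s) a b.
Proof.
  intros Hf Hg. symmetry. apply (RInt_minus f g a b); apply exRInt_c; auto.
Qed.

Lemma RInt_cont (f : R -> R) x : (forall s, continuity_pt f s) ->
  is_derive (fun y => RInt f 0 y) x (f x).
Proof.
  intros Hf. apply (is_derive_RInt f (fun y => RInt f 0 y) 0 x).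
  - exists (mkposreal 1 Rlt_0_1). intros y _. apply (@RInt_correct R_CompleteNormedModule), exRInt_c; auto.
  - apply cont_coq, Hf.
Qed.

Lemma RInt_cont_pt (f : R -> R) x : (forall s, continuity_pt f s) ->
  continuity_pt (fun y => RInt f 0 y) x.
Proof.
  intros Hf. apply derivable_continuous_pt.
  exists (f x). apply is_derive_Reals. apply RInt_cont; auto.
Qed.


Definition Sq w := sqrt (1 - w^2).
Definition phi w := w / Sq w.
Definition hf a s u w := a * ((u * Sq w - s * w) / (s^2 + u^2)).

Lemma prod_lip a b a' b' A B : Rabs a <= A -> Rabs b' <= B ->
  Rabs (a * b - a' * b') <= A * Rabs (b - b') + B * Rabs (a - a').
Proof.
  intros HA HB.
  replace (a * b - a' * b') with (a * (b - b') + b' * (a - a')) by ring.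
  eapply Rle_trans; [apply Rabs_triang|]. rewrite !Rabs_mult.
  apply Rplus_le_compat; apply Rmult_le_compat_r; auto; apply Rabs_pos.
Qed.

Lemma Sq_bounds w : Rabs w <= 1/2 -> 3/4 <= Sq w <= 1.
Proof.
  intros H. unfold Sq. assert (Hw2 : w^2 <= 1/4).
  { assert (Rabs w ^2 <= (1/2)^2) by (apply pow_incr; split; [apply Rabs_pos|auto]).
    rewrite RPow_abs in H0. rewrite Rabs_pos_eq in H0 by (apply pow2_ge_0). lra. }
  split.
  - rewrite <- (sqrt_pow2 (3/4)) by lra. apply sqrt_le_1_alt. simpl; lra.
  - apply Rle_trans with (sqrt 1); [apply sqrt_le_1_alt; pose proof (pow2_ge_0 w); lra | rewrite sqrt_1; lra].
Qed.

Lemma Sq_sq w : Rabs w <= 1 -> Sq w ^ 2 = 1 - w^2.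
Proof.
  intros H. unfold Sq. rewrite pow2_sqrt; auto.
  assert (Rabs w ^2 <= 1^2) by (apply pow_incr; split; [apply Rabs_pos|auto]).
  rewrite RPow_abs in H0. rewrite Rabs_pos_eq in H0 by (apply pow2_ge_0). lra.
Qed.

Lemma Sq_lip w w' : Rabs w <= 1/2 -> Rabs w' <= 1/2 -> Rabs (Sq w - Sq w') <= Rabs (w - w').
Proof.
  intros H H'. destruct (Sq_bounds w H). destruct (Sq_bounds w' H').
  assert (E : (Sq w - Sq w') * (Sq w + Sq w') = (w' - w) * (w' + w)).
  { replace ((Sq w - Sq w') * (Sq w + Sq w')) with (Sq w ^2 - Sq w' ^2) by ring.
    rewrite !Sq_sq by lra. ring. }
  assert (E2 : Rabs (Sq w - Sq w') * (Sq w + Sq w') = Rabs (w' - w) * Rabs (w' + w)).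
  { rewrite <- Rabs_mult, <- E, Rabs_mult. rewrite (Rabs_pos_eq (Sq w + Sq w')); lra. }
  assert (Rabs (w' + w) <= 1).
  { eapply Rle_trans; [apply Rabs_triang|lra]. }
  rewrite (Rabs_minus_sym w' w) in E2.
  pose proof (Rabs_pos (w - w')). pose proof (Rabs_pos (Sq w - Sq w')).
  assert (Rabs (w - w') * Rabs (w' + w) <= Rabs (w - w') * 1) by (apply Rmult_le_compat_l; lra).
  assert (Rabs (Sq w - Sq w') * 1 <= Rabs (Sq w - Sq w') * (Sq w + Sq w')) by (apply Rmult_le_compat_l; lra).
  lra.
Qed.

Lemma phi_bound w : Rabs w <= 1/2 -> Rabs (phi w) <= 1.
Proof.
  intros H. destruct (Sq_bounds w H). unfold phi, Rdiv.
  rewrite Rabs_mult, Rabs_inv, (Rabs_pos_eq (Sq w)) by lra.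
  apply Rle_trans with (1/2 * / (1/2)).
  - apply Rmult_le_compat; auto. apply Rabs_pos. left; apply Rinv_0_lt_compat; lra.
    apply Rinv_le_contravar; lra.
  - lra.
Qed.

Lemma phi_lip w w' : Rabs w <= 1/2 -> Rabs w' <= 1/2 -> Rabs (phi w - phi w') <= 3 * Rabs (w - w').
Proof.
  intros H H'. destruct (Sq_bounds w H). destruct (Sq_bounds w' H').
  unfold phi.
  replace (w / Sq w - w' / Sq w') with ((w * Sq w' - w' * Sq w) / (Sq w * Sq w')) by (field; lra).
  unfold Rdiv. rewrite Rabs_mult, Rabs_inv, (Rabs_pos_eq (Sq w * Sq w')) by nra.
  pose proof (prod_lip w (Sq w') w' (Sq w) (1/2) 1 H ltac:(rewrite Rabs_pos_eq; lra)).
  pose proof (Sq_lip w' w H' H). rewrite (Rabs_minus_sym w' w) in H5.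
  assert (Hn : Rabs (w * Sq w' - w' * Sq w) <= 3/2 * Rabs (w - w')).
  { lra. }
  assert (Hd : / (Sq w * Sq w') <= 2).
  { replace 2 with (/ (1/2)) by field. apply Rinv_le_contravar; nra. }
  pose proof (Rabs_pos (w * Sq w' - w' * Sq w)).
  assert (0 <= / (Sq w * Sq w')) by (left; apply Rinv_0_lt_compat; nra).
  nra.
Qed.


Definition Hc u00 := 3*u00*(4/u00^2).
Definition Lc u00 := 3*u00*(64/u00^3) + 4/u00^2*(3*u00+1).

Section HB.
Variables (u00 : R) (Hu : 0 < u00).

Definition inB (s u w : R) := 0 <= s <= u00/4 /\ u00/2 <= u <= 2*u00 /\ Rabs w <= 1/2.

Lemma N_bound s u w : inB s u w -> Rabs (u * Sq w - s * w) <= 3*u00.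
Proof.
  intros [Hs [Hu' Hw]]. destruct (Sq_bounds w Hw).
  eapply Rle_trans; [apply Rabs_triang|]. rewrite Rabs_Ropp, !Rabs_mult.
  rewrite (Rabs_pos_eq u), (Rabs_pos_eq s), (Rabs_pos_eq (Sq w)) by lra.
  pose proof (Rabs_pos w). nra.
Qed.

Lemma N_lip s u w u' w' d : inB s u w -> inB s u' w' -> Rabs (u - u') <= d -> Rabs (w - w') <= d ->
  Rabs ((u * Sq w - s * w) - (u' * Sq w' - s * w')) <= (3*u00+1) * d.
Proof.
  intros [Hs [Hu1 Hw]] [_ [Hu2 Hw']] Hdu Hdw. destruct (Sq_bounds w Hw). destruct (Sq_bounds w' Hw').
  replace ((u * Sq w - s * w) - (u' * Sq w' - s * w')) with ((u * Sq w - u' * Sq w') - s * (w - w')) by ring.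
  eapply Rle_trans; [apply Rabs_triang|]. rewrite Rabs_Ropp, Rabs_mult, (Rabs_pos_eq s) by lra.
  pose proof (prod_lip u (Sq w) u' (Sq w') (2*u00) 1 ltac:(rewrite Rabs_pos_eq; lra) ltac:(rewrite Rabs_pos_eq; lra)).
  pose proof (Sq_lip w w' Hw Hw').
  assert (s * Rabs (w - w') <= u00/4 * d) by (apply Rmult_le_compat; try lra; apply Rabs_pos).
  assert (2*u00 * Rabs (Sq w - Sq w') <= 2*u00 * d) by (apply Rmult_le_compat_l; lra).
  assert (0 <= d) by (pose proof (Rabs_pos (u-u')); lra).
  assert (0 <= u00 * d) by nra.
  nra.
Qed.

Lemma Q_bound s u : 0 <= s -> u00/2 <= u -> 0 < / (s^2 + u^2) <= 4/u00^2.
Proof.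
  intros Hs Hu'. assert (u00^2/4 <= s^2 + u^2) by nra.
  split. apply Rinv_0_lt_compat; nra.
  replace (4/u00^2) with (/ (u00^2/4)) by (field; lra).
  apply Rinv_le_contravar; nra.
Qed.

Lemma Q_lip s u u' d : 0 <= s -> u00/2 <= u <= 2*u00 -> u00/2 <= u' <= 2*u00 -> Rabs (u - u') <= d ->
  Rabs (/ (s^2 + u^2) - / (s^2 + u'^2)) <= 64/u00^3 * d.
Proof.
  intros Hs Hu1 Hu2 Hd.
  assert (D1 : u00^2/4 <= s^2 + u^2) by nra.
  assert (D2 : u00^2/4 <= s^2 + u'^2) by nra.
  assert (P0 : 0 < u00^2/4) by nra.
  assert (P1 : 0 < (s^2+u^2) * (s^2+u'^2)) by (apply Rmult_lt_0_compat; lra).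
  replace (/ (s^2 + u^2) - / (s^2 + u'^2)) with ((u' - u) * (u' + u) * / ((s^2+u^2) * (s^2+u'^2))) by (field; split; apply Rgt_not_eq; lra).
  rewrite !Rabs_mult, (Rabs_pos_eq (u' + u)) by lra.
  rewrite (Rabs_pos_eq (/ _)) by (left; apply Rinv_0_lt_compat; lra).
  assert (Hi : / ((s^2+u^2) * (s^2+u'^2)) <= / (u00^2/4 * (u00^2/4))).
  { apply Rinv_le_contravar; [nra|]. apply Rmult_le_compat; nra. }
  rewrite Rabs_minus_sym in Hd.
  assert (Rabs (u' - u) * (u' + u) <= d * (4*u00)) by (apply Rmult_le_compat; try lra; apply Rabs_pos).
  assert (0 <= / ((s^2+u^2) * (s^2+u'^2))) by (left; apply Rinv_0_lt_compat; nra).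
  apply Rle_trans with (d * (4*u00) * / (u00^2/4 * (u00^2/4))).
  - apply Rmult_le_compat; try nra. apply Rmult_le_pos; [apply Rabs_pos|lra].
  - assert (0 <= d) by (pose proof (Rabs_pos (u'-u)); lra).
    right. field. lra.
Qed.

Lemma NQ_bound s u w : inB s u w -> Rabs ((u * Sq w - s * w) / (s^2 + u^2)) <= Hc u00.
Proof.
  intros HB. pose proof (N_bound s u w HB). destruct HB as [Hs [Hu' Hw]].
  destruct (Q_bound s u) as [Q1 Q2]; try lra.
  unfold Rdiv, Hc. rewrite Rabs_mult, (Rabs_pos_eq (/ _)) by lra.
  apply Rmult_le_compat; auto; try lra. apply Rabs_pos.
Qed.

Lemma hf_bound a A s u w : Rabs a <= A -> inB s u w -> Rabs (hf a s u w) <= A * Hc u00.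
Proof.
  intros Ha HB. unfold hf. rewrite Rabs_mult. apply Rmult_le_compat; auto; try apply Rabs_pos.
  apply NQ_bound; auto.
Qed.

Lemma hf_par a a' s u w : inB s u w -> Rabs (hf a s u w - hf a' s u w) <= Rabs (a - a') * Hc u00.
Proof.
  intros HB. unfold hf. rewrite <- Rmult_minus_distr_r, Rabs_mult.
  apply Rmult_le_compat_l; [apply Rabs_pos|]. apply NQ_bound; auto.
Qed.

Lemma hf_lip a A s u w u' w' d : Rabs a <= A -> inB s u w -> inB s u' w' ->
  Rabs (u - u') <= d -> Rabs (w - w') <= d ->
  Rabs (hf a s u w - hf a s u' w') <= A * Lc u00 * d.
Proof.
  intros Ha HB HB' Hdu Hdw.
  pose proof (N_lip s u w u' w' d HB HB' Hdu Hdw).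
  pose proof (N_bound s u w HB).
  destruct HB as [Hs [Hu1 Hw]]. destruct HB' as [_ [Hu2 Hw']].
  pose proof (Q_lip s u u' d ltac:(lra) Hu1 Hu2 Hdu).
  destruct (Q_bound s u') as [Q1 Q2]; try lra.
  pose proof (prod_lip (u * Sq w - s * w) (/ (s^2+u^2)) (u' * Sq w' - s * w') (/ (s^2+u'^2))
     (3*u00) (4/u00^2) H0 ltac:(rewrite Rabs_pos_eq; lra)).
  unfold hf, Rdiv. rewrite <- Rmult_minus_distr_l, Rabs_mult.
  assert (0 <= d) by (pose proof (Rabs_pos (u-u')); lra).
  apply Rle_trans with (A * (3 * u00 * (64 / u00 ^ 3 * d) + 4 / u00 ^ 2 * ((3 * u00 + 1) * d))).
  - apply Rmult_le_compat; try apply Rabs_pos; auto.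
    eapply Rle_trans; [exact H2|].
    assert (0 < 4/u00^2) by (apply Rdiv_lt_0_compat; [lra| apply pow_lt; lra]).
    apply Rplus_le_compat; apply Rmult_le_compat_l; lra.
  - right. unfold Lc. ring.
Qed.

End HB.


Lemma cp_plus f g x : continuity_pt f x -> continuity_pt g x -> continuity_pt (fun y => f y + g y) x.
Proof. intros; exact (continuity_pt_plus f g x H H0). Qed.
Lemma cp_minus f g x : continuity_pt f x -> continuity_pt g x -> continuity_pt (fun y => f y - g y) x.
Proof. intros; exact (continuity_pt_minus f g x H H0). Qed.
Lemma cp_mult f g x : continuity_pt f x -> continuity_pt g x -> continuity_pt (fun y => f y * g y) x.
Proof. intros; exact (continuity_pt_mult f g x H H0). Qed.
Lemma cp_inv f x : continuity_pt f x -> f x <> 0 -> continuity_pt (fun y => / f y) x.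
Proof. intros; exact (continuity_pt_inv f x H H0). Qed.
Lemma cp_div f g x : continuity_pt f x -> continuity_pt g x -> g x <> 0 -> continuity_pt (fun y => f y / g y) x.
Proof. intros. unfold Rdiv. apply cp_mult; auto. apply cp_inv; auto. Qed.
Lemma cp_const c x : continuity_pt (fun _ => c) x.
Proof. apply continuity_pt_const. intros a b; reflexivity. Qed.
Lemma cp_id x : continuity_pt (fun y => y) x.
Proof. apply derivable_continuous_pt, derivable_pt_id. Qed.
Lemma cp_sq f x : continuity_pt f x -> continuity_pt (fun y => f y ^ 2) x.
Proof. intros. simpl. apply cp_mult; auto. apply cp_mult; auto. apply cp_const. Qed.
Lemma cp_sqrt f x : continuity_pt f x -> 0 < f x -> continuity_pt (fun y => sqrt (f y)) x.
Proof. intros. apply (continuity_pt_comp f sqrt x); auto. apply continuity_pt_sqrt; lra. Qed.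

Lemma cp_Sq w x : continuity_pt w x -> Rabs (w x) <= 1/2 -> continuity_pt (fun y => Sq (w y)) x.
Proof.
  intros Hc Hb. unfold Sq. apply cp_sqrt. apply cp_minus. apply cp_const. apply cp_sq; auto.
  assert (Rabs (w x) ^2 <= (1/2)^2) by (apply pow_incr; split; [apply Rabs_pos|auto]).
  rewrite RPow_abs, Rabs_pos_eq in H by (apply pow2_ge_0). simpl in *. lra.
Qed.

Lemma cp_phi w x : continuity_pt w x -> Rabs (w x) <= 1/2 -> continuity_pt (fun y => phi (w y)) x.
Proof.
  intros Hc Hb. unfold phi. apply cp_div; auto. apply cp_Sq; auto.
  destruct (Sq_bounds _ Hb). lra.
Qed.

Lemma cp_hf a u w x : continuity_pt u x -> continuity_pt w x -> Rabs (w x) <= 1/2 -> 0 < u x ->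
  continuity_pt (fun s => hf a s (u s) (w s)) x.
Proof.
  intros Hu Hw Hb Hp. unfold hf. apply cp_mult. apply cp_const. apply cp_div.
  - apply cp_minus. apply cp_mult; auto. apply cp_Sq; auto. apply cp_mult; auto. apply cp_id.
  - apply cp_plus. apply cp_sq, cp_id. apply cp_sq; auto.
  - pose proof (pow2_ge_0 x). assert (0 < u x ^2) by (apply pow_lt; auto). lra.
Qed.

Definition Cl Rp r := Rmax 0 (Rmin Rp r).

Lemma Cl_range Rp r : 0 <= Rp -> 0 <= Cl Rp r <= Rp.
Proof. intros. unfold Cl, Rmax, Rmin. repeat destruct Rle_dec; lra. Qed.
Lemma Cl_id Rp r : 0 <= r <= Rp -> Cl Rp r = r.
Proof. intros. unfold Cl, Rmax, Rmin. repeat destruct Rle_dec; lra. Qed.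
Lemma Cl_lip Rp x y : 0 <= Rp -> Rabs (Cl Rp x - Cl Rp y) <= Rabs (x - y).
Proof. intros. unfold Cl, Rmax, Rmin. repeat destruct Rle_dec; unfold Rabs; repeat destruct Rcase_abs; lra. Qed.
Lemma cp_Cl Rp x : 0 <= Rp -> continuity_pt (Cl Rp) x.
Proof.
  intros H. apply eps_cont. intros eps He. exists eps; split; auto.
  intros y Hy. eapply Rle_lt_trans; [apply Cl_lip; auto| exact Hy].
Qed.


Lemma RInt_00 (f : R -> R) : RInt f 0 0 = 0.
Proof. apply (@RInt_point R_CompleteNormedModule). Qed.

Lemma avg_bound (f : R -> R) c M : 0 <= c -> (forall s, continuity_pt f s) ->
  (forall s, 0 <= s <= c -> Rabs (f s) <= M) -> Rabs (/ c * RInt f 0 c) <= M.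
Proof.
  intros Hc Hf HM. destruct (Req_dec c 0) as [->|Hne].
  - rewrite RInt_00, Rmult_0_r, Rabs_R0. specialize (HM 0 ltac:(lra)).
    pose proof (Rabs_pos (f 0)). lra.
  - rewrite Rabs_mult, Rabs_inv, (Rabs_pos_eq c) by lra.
    pose proof (int_bound f c M Hc Hf HM).
    apply Rmult_le_compat_l with (r := / c) in H; [|left; apply Rinv_0_lt_compat; lra].
    replace (/ c * (c * M)) with M in H by (field; lra). exact H.
Qed.

Definition Lc_pos u00 : 0 < u00 -> 0 < Lc u00.
Proof.
  intros H. unfold Lc. assert (0 < u00^3) by (apply pow_lt; lra).
  assert (0 < u00^2) by (apply pow_lt; lra).
  assert (0 < 64/u00^3) by (apply Rdiv_lt_0_compat; lra).
  assert (0 < 4/u00^2) by (apply Rdiv_lt_0_compat; lra).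
  assert (0 < 3*u00*(64/u00^3)) by (apply Rmult_lt_0_compat; lra).
  assert (0 < 4/u00^2*(3*u00+1)) by (apply Rmult_lt_0_compat; lra). lra.
Qed.

Definition Hc_pos u00 : 0 < u00 -> 0 < Hc u00.
Proof.
  intros H. unfold Hc. assert (0 < u00^2) by (apply pow_lt; lra).
  assert (0 < 4/u00^2) by (apply Rdiv_lt_0_compat; lra).
  apply Rmult_lt_0_compat; lra.
Qed.

Section Op.
Variables (u00 A Rp : R).
Hypotheses (Hu : 0 < u00) (HA : 0 <= A) (HR : 0 < Rp) (HR1 : Rp <= u00/4)
  (HR2 : Rp * (A * Hc u00) <= 1/2) (HR3 : Rp * (3 + A * Lc u00) <= 1/2).

Definition Tu u0 (w : R -> R) r := u0 + RInt (fun s => phi (w s)) 0 (Cl Rp r).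
Definition Tw a (u w : R -> R) r := / Cl Rp r * RInt (fun s => s * hf a s (u s) (w s)) 0 (Cl Rp r).

Definition Good (u w : R -> R) := forall r,
  (u00/2 <= u r <= 2*u00 /\ Rabs (w r) <= 1/2) /\ continuity_pt u r /\ continuity_pt w r.

Definition PA a u0 := Rabs a <= A /\ Rabs (u0 - u00) <= u00/4.

Lemma inB_of u w s : Good u w -> 0 <= s <= Rp -> inB u00 s (u s) (w s).
Proof. intros G Hs. destruct (G s) as [[H1 H2] _]. split; [lra|split; auto]. Qed.

Lemma cont_phiw u w : Good u w -> forall s, continuity_pt (fun s => phi (w s)) s.
Proof. intros G s. destruct (G s) as [[_ H2] [_ H3]]. apply cp_phi; auto. Qed.

Lemma cont_g a u w : Good u w -> forall s, continuity_pt (fun s => s * hf a s (u s) (w s)) s.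
Proof.
  intros G s. destruct (G s) as [[H1 H2] [H3 H4]]. apply cp_mult. apply cp_id. apply cp_hf; auto. lra.
Qed.

Lemma g_bound a u w c s : Rabs a <= A -> Good u w -> 0 <= s <= c -> c <= Rp ->
  Rabs (s * hf a s (u s) (w s)) <= c * (A * Hc u00).
Proof.
  intros Ha G Hs Hc. rewrite Rabs_mult, (Rabs_pos_eq s) by lra.
  apply Rmult_le_compat; try lra. apply Rabs_pos.
  apply hf_bound; auto. apply inB_of; auto. lra.
Qed.

Lemma Tw_bound a u w r : Rabs a <= A -> Good u w -> Rabs (Tw a u w r) <= Cl Rp r * (A * Hc u00).
Proof.
  intros Ha G. unfold Tw. destruct (Cl_range Rp r) as [C1 C2]; [lra|].
  apply avg_bound; auto. apply cont_g; auto.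
  intros s Hs. apply g_bound; auto.
Qed.

Lemma Tu_bound u0 w u r : Good u w -> Rabs (Tu u0 w r - u0) <= Cl Rp r.
Proof.
  intros G. unfold Tu. destruct (Cl_range Rp r) as [C1 C2]; [lra|].
  rewrite (Rplus_comm u0), Rplus_minus_r.
  apply Rle_trans with (Cl Rp r * 1); [|lra]. apply int_bound; auto. apply (cont_phiw u); auto.
  intros s _. apply phi_bound. destruct (G s) as [[_ H] _]. auto.
Qed.

Lemma Tu_cont u0 u w r : Good u w -> continuity_pt (Tu u0 w) r.
Proof.
  intros G. unfold Tu. apply cp_plus. apply cp_const.
  apply (continuity_pt_comp (Cl Rp) (fun y => RInt (fun s => phi (w s)) 0 y) r).
  apply cp_Cl; lra. apply RInt_cont_pt. apply (cont_phiw u); auto.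
Qed.

Lemma Tw_cont a u w r : Rabs a <= A -> Good u w -> continuity_pt (Tw a u w) r.
Proof.
  intros Ha G. destruct (Cl_range Rp r) as [C1 C2]; [lra|].
  destruct (Req_dec (Cl Rp r) 0) as [E|E].
  - apply eps_cont. intros eps He.
    assert (K : 0 < A * Hc u00 + 1) by (pose proof (Hc_pos u00 Hu); nra).
    exists (eps / (A * Hc u00 + 1)). split. apply Rdiv_lt_0_compat; lra.
    intros y Hy. unfold Tw at 2. rewrite E, Rinv_0, Rmult_0_l, Rminus_0_r.
    eapply Rle_lt_trans. apply Tw_bound; auto.
    pose proof (Cl_lip Rp y r ltac:(lra)). rewrite E, Rminus_0_r in H.
    destruct (Cl_range Rp y) as [C3 C4]; [lra|]. rewrite Rabs_pos_eq in H by lra.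
    assert (0 <= A * Hc u00) by (pose proof (Hc_pos u00 Hu); nra).
    apply Rle_lt_trans with (Cl Rp y * (A * Hc u00 + 1)). nra.
    apply Rlt_le_trans with (eps / (A * Hc u00 + 1) * (A * Hc u00 + 1)).
    apply Rmult_lt_compat_r; lra. right; field; lra.
  - unfold Tw.
    apply cp_mult.
    + apply (cp_inv (Cl Rp) r); auto. apply cp_Cl; lra.
    + apply (continuity_pt_comp (Cl Rp) (fun y => RInt (fun s => s * hf a s (u s) (w s)) 0 y) r).
      apply cp_Cl; lra. apply RInt_cont_pt. apply cont_g; auto.
Qed.

Lemma T_good a u0 u w : PA a u0 -> Good u w -> Good (Tu u0 w) (Tw a u w).
Proof.
  intros [Ha Hu0] G r. split; [split|split].
  - pose proof (Tu_bound u0 w u r G). destruct (Cl_range Rp r) as [C1 C2]; [lra|].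
    unfold Rabs in *; repeat destruct Rcase_abs; lra.
  - eapply Rle_trans. apply Tw_bound; auto. destruct (Cl_range Rp r) as [C1 C2]; [lra|].
    assert (0 <= A * Hc u00) by (pose proof (Hc_pos u00 Hu); nra).
    apply Rle_trans with (Rp * (A * Hc u00)); [|lra]. apply Rmult_le_compat_r; lra.
  - apply (Tu_cont u0 u); auto.
  - apply Tw_cont; auto.
Qed.

Lemma T_contr a u0 u w u' w' d : PA a u0 -> Good u w -> Good u' w' ->
  (forall s, Rabs (u s - u' s) <= d /\ Rabs (w s - w' s) <= d) ->
  forall r, Rabs (Tu u0 w r - Tu u0 w' r) <= d/2 /\ Rabs (Tw a u w r - Tw a u' w' r) <= d/2.
Proof.
  intros [Ha Hu0] G G' Hd r. destruct (Cl_range Rp r) as [C1 C2]; [lra|].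
  assert (Hd0 : 0 <= d) by (destruct (Hd 0); pose proof (Rabs_pos (u 0 - u' 0)); lra).
  pose proof (Lc_pos u00 Hu).
  split.
  - unfold Tu. set (I1 := RInt (fun s : R => phi (w s)) 0 (Cl Rp r)).
    set (I2 := RInt (fun s : R => phi (w' s)) 0 (Cl Rp r)).
    replace (u0 + I1 - (u0 + I2)) with (I1 - I2) by ring. unfold I1, I2.
    rewrite RInt_sub; [| apply (cont_phiw u); auto | apply (cont_phiw u'); auto].
    eapply Rle_trans. apply (int_bound _ _ (3 * d)); auto.
    + intros s. apply cp_minus; [apply (cont_phiw u)|apply (cont_phiw u')]; auto.
    + intros s _. eapply Rle_trans. apply phi_lip. apply (G s). apply (G' s).
      apply Rmult_le_compat_l; [lra|apply (Hd s)].
    + apply Rle_trans with (Rp * (3 * d)). apply Rmult_le_compat_r; lra.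
      assert (Rp * (3 * d) <= Rp * (3 + A * Lc u00) * d).
      { assert (0 <= A * Lc u00) by nra. assert (0 <= Rp * (A * Lc u00) * d) by (apply Rmult_le_pos; [apply Rmult_le_pos|]; lra). nra. }
      nra.
  - unfold Tw. rewrite <- Rmult_minus_distr_l.
    rewrite RInt_sub by (apply cont_g; auto).
    eapply Rle_trans. apply (avg_bound _ _ (Rp * (A * Lc u00 * d))); auto.
    + intros s. apply cp_minus; apply cont_g; auto.
    + intros s Hs. rewrite <- Rmult_minus_distr_l, Rabs_mult, (Rabs_pos_eq s) by lra.
      apply Rmult_le_compat; try lra. apply Rabs_pos.
      apply hf_lip; auto; try (apply inB_of; auto; lra); apply (Hd s).
    + assert (0 <= A * Lc u00) by nra.
      assert (Rp * (A * Lc u00) <= 1/2) by nra. nra.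
Qed.

Lemma T_par a u0 a' u0' u w : Good u w -> forall r,
  Rabs (Tu u0 w r - Tu u0' w r) = Rabs (u0 - u0') /\
  Rabs (Tw a u w r - Tw a' u w r) <= Rp * (Rabs (a - a') * Hc u00).
Proof.
  intros G r. destruct (Cl_range Rp r) as [C1 C2]; [lra|]. split.
  - unfold Tu. set (I1 := RInt (fun s : R => phi (w s)) 0 (Cl Rp r)). f_equal. ring.
  - unfold Tw. rewrite <- Rmult_minus_distr_l.
    rewrite RInt_sub by (apply cont_g; auto).
    eapply Rle_trans. apply (avg_bound _ _ (Rp * (Rabs (a - a') * Hc u00))); auto.
    + intros s. apply cp_minus; apply cont_g; auto.
    + intros s Hs. rewrite <- Rmult_minus_distr_l, Rabs_mult, (Rabs_pos_eq s) by lra.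
      apply Rmult_le_compat; try lra. apply Rabs_pos.
      apply hf_par; auto; apply inB_of; auto; lra.
    + lra.
Qed.

End Op.


Lemma small_pow K eps : 0 < K -> 0 < eps -> exists n, K * (/2)^n < eps.
Proof.
  intros HK He.
  destruct (pow_lt_1_zero (/2) ltac:(rewrite Rabs_pos_eq; lra) (eps / K)) as [N HN].
  { apply Rdiv_lt_0_compat; lra. }
  exists N. specialize (HN N (le_n _)). rewrite Rabs_pos_eq in HN by (apply pow_le; lra).
  apply Rmult_lt_compat_l with (r := K) in HN; [|lra].
  replace (K * (eps / K)) with eps in HN by (field; lra). lra.
Qed.

Lemma unif_cont (f : nat -> R -> R) g K x : 0 < K -> (forall n, continuity_pt (f n) x) ->
  (forall n y, Rabs (f n y - g y) <= K * (/2)^n) -> continuity_pt g x.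
Proof.
  intros HK Hc Hu. apply eps_cont. intros eps He.
  destruct (small_pow K (eps/3) HK ltac:(lra)) as [n Hn].
  destruct (cont_eps (f n) x (Hc n) (eps/3) ltac:(lra)) as [d [Hd H]].
  exists d; split; auto. intros y Hy. specialize (H y Hy).
  pose proof (Hu n y). pose proof (Hu n x).
  replace (g y - g x) with ((g y - f n y) + (f n y - f n x) + (f n x - g x)) by ring.
  eapply Rle_lt_trans. apply Rabs_triang. eapply Rle_lt_trans. apply Rplus_le_compat_r, Rabs_triang.
  rewrite (Rabs_minus_sym (g y)). lra.
Qed.

Lemma lim_le0 a K : 0 <= K -> (forall n, a <= K * (/2)^n) -> a <= 0.
Proof. intros _ H. apply (lim_half a K H). Qed.

Section Iter.
Variables (u00 A Rp : R).
Hypotheses (Hu : 0 < u00) (HA : 0 <= A) (HR : 0 < Rp) (HR1 : Rp <= u00/4)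
  (HR2 : Rp * (A * Hc u00) <= 1/2) (HR3 : Rp * (3 + A * Lc u00) <= 1/2).

Fixpoint itp a u0 n : (R -> R) * (R -> R) :=
  match n with
  | O => (fun _ => u0, fun _ => 0)
  | S n => let p := itp a u0 n in (Tu Rp u0 (snd p), Tw Rp a (fst p) (snd p))
  end.

Definition Ulim a u0 r := real (Lim_seq (fun n => fst (itp a u0 n) r)).
Definition Wlim a u0 r := real (Lim_seq (fun n => snd (itp a u0 n) r)).

Definition D0 := 2 * u00 + 1.

Variables (a u0 : R).
Hypothesis (HP : PA u00 A a u0).

Lemma it_good n : Good u00 (fst (itp a u0 n)) (snd (itp a u0 n)).
Proof.
  induction n as [|n IH].
  - intros r. simpl. destruct HP as [_ H]. split; [split|split].
    + unfold Rabs in H; destruct Rcase_abs; lra.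
    + rewrite Rabs_R0; lra.
    + apply cp_const.
    + apply cp_const.
  - simpl. apply (T_good u00 A Rp Hu HA HR HR1 HR2); auto.
Qed.

Lemma it_step n : forall r, Rabs (fst (itp a u0 (S n)) r - fst (itp a u0 n) r) <= D0 * (/2)^n /\
  Rabs (snd (itp a u0 (S n)) r - snd (itp a u0 n) r) <= D0 * (/2)^n.
Proof.
  induction n as [|n IH]; intros r.
  - pose proof (it_good 1 r) as [[B1 B2] _]. pose proof (it_good 0 r) as [[B3 B4] _].
    unfold D0. simpl pow. rewrite Rmult_1_r. split.
    + unfold Rabs; destruct Rcase_abs; lra.
    + eapply Rle_trans; [apply Rabs_triang|]. rewrite Rabs_Ropp. lra.
  - change (itp a u0 (S (S n))) with (Tu Rp u0 (snd (itp a u0 (S n))), Tw Rp a (fst (itp a u0 (S n))) (snd (itp a u0 (S n)))).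
    change (itp a u0 (S n)) with (Tu Rp u0 (snd (itp a u0 n)), Tw Rp a (fst (itp a u0 n)) (snd (itp a u0 n))) at 2 4.
    simpl fst; simpl snd.
    destruct (T_contr u00 A Rp Hu HA HR HR1 HR3 a u0 _ _ _ _ (D0 * (/2)^n) HP (it_good (S n)) (it_good n) IH r).
    replace (D0 * (/2)^(S n)) with (D0 * (/2)^n / 2) by (simpl; field). auto.
Qed.

Lemma it_cauchy n m r : Rabs (fst (itp a u0 (n + m)) r - fst (itp a u0 n) r) <= 2 * D0 * (/2)^n - 2 * D0 * (/2)^(n+m) /\
  Rabs (snd (itp a u0 (n + m)) r - snd (itp a u0 n) r) <= 2 * D0 * (/2)^n - 2 * D0 * (/2)^(n+m).
Proof.
  induction m as [|m IH].
  - rewrite Nat.add_0_r, !Rminus_diag, Rabs_R0. lra.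
  - rewrite Nat.add_succ_r. destruct (it_step (n + m) r) as [S1 S2]. destruct IH as [I1 I2].
    replace (2 * D0 * (/2)^(S (n+m))) with (D0 * (/2)^(n+m)) by (simpl; field).
    split.
    + replace (fst (itp a u0 (S (n + m))) r - fst (itp a u0 n) r) with
        ((fst (itp a u0 (S (n + m))) r - fst (itp a u0 (n+m)) r) + (fst (itp a u0 (n + m)) r - fst (itp a u0 n) r)) by ring.
      eapply Rle_trans; [apply Rabs_triang|]. lra.
    + replace (snd (itp a u0 (S (n + m))) r - snd (itp a u0 n) r) with
        ((snd (itp a u0 (S (n + m))) r - snd (itp a u0 (n+m)) r) + (snd (itp a u0 (n + m)) r - snd (itp a u0 n) r)) by ring.
      eapply Rle_trans; [apply Rabs_triang|]. lra.
Qed.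

Lemma D0_pos : 0 < D0.
Proof. unfold D0; lra. Qed.

Lemma cauchy_lim (x : nat -> R) : (forall n m, Rabs (x (n + m)%nat - x n) <= 2 * D0 * (/2)^n) ->
  forall n, Rabs (x n - real (Lim_seq x)) <= 2 * D0 * (/2)^n.
Proof.
  intros Hc.
  assert (Hex : ex_finite_lim_seq x).
  { apply ex_lim_seq_cauchy_corr. intros [eps He].
    destruct (small_pow (2 * D0) (eps/2) ltac:(pose proof D0_pos; lra) ltac:(lra)) as [N HN].
    exists N. intros n m Hn Hm. simpl.
    assert (forall k, (N <= k)%nat -> Rabs (x k - x N) <= 2 * D0 * (/2)^N).
    { intros k Hk. replace k with (N + (k - N))%nat by lia. apply Hc. }
    pose proof (H n Hn). pose proof (H m Hm).
    replace (x n - x m) with ((x n - x N) - (x m - x N)) by ring.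
    eapply Rle_lt_trans; [apply Rabs_triang|]. rewrite Rabs_Ropp. lra. }
  pose proof (Lim_seq_correct' x Hex) as Hl. apply is_lim_seq_Reals in Hl.
  intros n. apply le_epsilon. intros eps He.
  destruct (Hl eps He) as [N HN]. specialize (HN (n + N)%nat ltac:(lia)).
  unfold R_dist in HN. pose proof (Hc n N).
  replace (x n - real (Lim_seq x)) with (- (x (n + N)%nat - x n) + (x (n + N)%nat - real (Lim_seq x))) by ring.
  eapply Rle_trans; [apply Rabs_triang|]. rewrite Rabs_Ropp. lra.
Qed.

Lemma lim_err n r : Rabs (fst (itp a u0 n) r - Ulim a u0 r) <= 2 * D0 * (/2)^n /\
  Rabs (snd (itp a u0 n) r - Wlim a u0 r) <= 2 * D0 * (/2)^n.
Proof.
  split.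
  - apply (cauchy_lim (fun n => fst (itp a u0 n) r)). intros k m.
    destruct (it_cauchy k m r) as [H _]. pose proof (pow_le (/2) (k+m) ltac:(lra)). pose proof D0_pos. nra.
  - apply (cauchy_lim (fun n => snd (itp a u0 n) r)). intros k m.
    destruct (it_cauchy k m r) as [_ H]. pose proof (pow_le (/2) (k+m) ltac:(lra)). pose proof D0_pos. nra.
Qed.

Lemma lim_good : Good u00 (Ulim a u0) (Wlim a u0).
Proof.
  intros r. pose proof D0_pos. split; [split; [split|]|split].
  - assert (u00/2 - Ulim a u0 r <= 0); [|lra].
    apply (lim_half _ (2 * D0)). intros n. destruct (lim_err n r) as [H1 _].
    destruct (it_good n r) as [[[B1 B2] _] _].
    unfold Rabs in H1; destruct Rcase_abs in H1; lra.
  - assert (Ulim a u0 r - 2 * u00 <= 0); [|lra].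
    apply (lim_half _ (2 * D0)). intros n. destruct (lim_err n r) as [H1 _].
    destruct (it_good n r) as [[[B1 B2] _] _].
    unfold Rabs in H1; destruct Rcase_abs in H1; lra.
  - assert (Rabs (Wlim a u0 r) - 1/2 <= 0); [|lra].
    apply (lim_half _ (2 * D0)). intros n. destruct (lim_err n r) as [_ H1].
    destruct (it_good n r) as [[_ B] _].
    pose proof (Rabs_triang (snd (itp a u0 n) r) (Wlim a u0 r - snd (itp a u0 n) r)).
    replace (snd (itp a u0 n) r + (Wlim a u0 r - snd (itp a u0 n) r)) with (Wlim a u0 r) in H0 by ring.
    rewrite Rabs_minus_sym in H1. lra.
  - apply (unif_cont (fun n => fst (itp a u0 n)) _ (2 * D0)); [lra| |].
    intros n. apply (it_good n r). intros n y. apply (lim_err n y).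
  - apply (unif_cont (fun n => snd (itp a u0 n)) _ (2 * D0)); [lra| |].
    intros n. apply (it_good n r). intros n y. apply (lim_err n y).
Qed.

Lemma lim_fixed r : Ulim a u0 r = Tu Rp u0 (Wlim a u0) r /\ Wlim a u0 r = Tw Rp a (Ulim a u0) (Wlim a u0) r.
Proof.
  pose proof D0_pos.
  assert (Hd : forall n, forall r, Rabs (Ulim a u0 r - Tu Rp u0 (Wlim a u0) r) <= 2 * D0 * (/2)^n /\
                    Rabs (Wlim a u0 r - Tw Rp a (Ulim a u0) (Wlim a u0) r) <= 2 * D0 * (/2)^n).
  { intros n r'.
    assert (Hs : forall s, Rabs (fst (itp a u0 n) s - Ulim a u0 s) <= 2 * D0 * (/2)^n /\
                           Rabs (snd (itp a u0 n) s - Wlim a u0 s) <= 2 * D0 * (/2)^n) by (intros; apply lim_err).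
    destruct (T_contr u00 A Rp Hu HA HR HR1 HR3 a u0 _ _ _ _ _ HP (it_good n) lim_good Hs r') as [C1 C2].
    destruct (lim_err (S n) r') as [E1 E2]. simpl fst in E1. simpl snd in E2.
    replace (2 * D0 * (/2)^(S n)) with (2 * D0 * (/2)^n / 2) in E1, E2 by (simpl; field).
    split.
    - replace (Ulim a u0 r' - Tu Rp u0 (Wlim a u0) r') with
        (- (Tu Rp u0 (snd (itp a u0 n)) r' - Ulim a u0 r') + (Tu Rp u0 (snd (itp a u0 n)) r' - Tu Rp u0 (Wlim a u0) r')) by ring.
      eapply Rle_trans; [apply Rabs_triang|]. rewrite Rabs_Ropp. lra.
    - replace (Wlim a u0 r' - Tw Rp a (Ulim a u0) (Wlim a u0) r') with
        (- (Tw Rp a (fst (itp a u0 n)) (snd (itp a u0 n)) r' - Wlim a u0 r') +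
         (Tw Rp a (fst (itp a u0 n)) (snd (itp a u0 n)) r' - Tw Rp a (Ulim a u0) (Wlim a u0) r')) by ring.
      eapply Rle_trans; [apply Rabs_triang|]. rewrite Rabs_Ropp. lra. }
  split.
  - assert (Rabs (Ulim a u0 r - Tu Rp u0 (Wlim a u0) r) <= 0).
    { apply (lim_half _ (2 * D0)). intros n. apply (Hd n r). }
    pose proof (Rabs_pos (Ulim a u0 r - Tu Rp u0 (Wlim a u0) r)).
    assert (HH : Rabs (Ulim a u0 r - Tu Rp u0 (Wlim a u0) r) = 0) by lra.
    apply Rabs_eq_0 in HH. lra.
  - assert (Rabs (Wlim a u0 r - Tw Rp a (Ulim a u0) (Wlim a u0) r) <= 0).
    { apply (lim_half _ (2 * D0)). intros n. apply (Hd n r). }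
    pose proof (Rabs_pos (Wlim a u0 r - Tw Rp a (Ulim a u0) (Wlim a u0) r)).
    assert (HH : Rabs (Wlim a u0 r - Tw Rp a (Ulim a u0) (Wlim a u0) r) = 0) by lra.
    apply Rabs_eq_0 in HH. lra.
Qed.

End Iter.


Section Par.
Variables (u00 A Rp : R).
Hypotheses (Hu : 0 < u00) (HA : 0 <= A) (HR : 0 < Rp) (HR1 : Rp <= u00/4)
  (HR2 : Rp * (A * Hc u00) <= 1/2) (HR3 : Rp * (3 + A * Lc u00) <= 1/2).

Lemma par_dep a u0 a' u0' : PA u00 A a u0 -> PA u00 A a' u0' -> forall r,
  Rabs (Ulim Rp a u0 r - Ulim Rp a' u0' r) <= 2 * (Rabs (u0 - u0') + Rp * (Rabs (a - a') * Hc u00)) /\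
  Rabs (Wlim Rp a u0 r - Wlim Rp a' u0' r) <= 2 * (Rabs (u0 - u0') + Rp * (Rabs (a - a') * Hc u00)).
Proof.
  intros HP HP'.
  set (E := 2 * (Rabs (u0 - u0') + Rp * (Rabs (a - a') * Hc u00))).
  assert (HE : 0 <= E).
  { unfold E. pose proof (Rabs_pos (u0 - u0')). pose proof (Rabs_pos (a - a')). pose proof (Hc_pos u00 Hu).
    assert (0 <= Rabs (a - a') * Hc u00) by nra. nra. }
  pose proof (lim_good u00 A Rp Hu HA HR HR1 HR2 HR3 a u0 HP) as G.
  pose proof (lim_good u00 A Rp Hu HA HR HR1 HR2 HR3 a' u0' HP') as G'.
  pose proof (D0_pos u00 Hu) as HD.
  assert (Hn : forall n r, Rabs (Ulim Rp a u0 r - Ulim Rp a' u0' r) <= D0 u00 * (/2)^n + E /\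
                          Rabs (Wlim Rp a u0 r - Wlim Rp a' u0' r) <= D0 u00 * (/2)^n + E).
  { induction n as [|n IH]; intros r.
    - destruct (G r) as [[[B1 B2] B3] _]. destruct (G' r) as [[[B4 B5] B6] _].
      simpl pow. unfold D0. split.
      + unfold Rabs; destruct Rcase_abs; lra.
      + eapply Rle_trans; [apply Rabs_triang|]. rewrite Rabs_Ropp. lra.
    - destruct (lim_fixed u00 A Rp Hu HA HR HR1 HR2 HR3 a u0 HP r) as [F1 F2].
      destruct (lim_fixed u00 A Rp Hu HA HR HR1 HR2 HR3 a' u0' HP' r) as [F3 F4].
      destruct (T_contr u00 A Rp Hu HA HR HR1 HR3 a u0 _ _ _ _ _ HP G G' IH r) as [C1 C2].
      destruct (T_par u00 Rp Hu HR HR1 a u0 a' u0' _ _ G' r) as [P1 P2].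
      assert (Rabs (u0 - u0') <= E/2).
      { unfold E. pose proof (Rabs_pos (a - a')). pose proof (Hc_pos u00 Hu).
        assert (0 <= Rabs (a - a') * Hc u00) by nra. nra. }
      assert (Rp * (Rabs (a - a') * Hc u00) <= E/2).
      { unfold E. pose proof (Rabs_pos (u0 - u0')). lra. }
      replace (D0 u00 * (/2)^(S n) + E) with ((D0 u00 * (/2)^n + E) / 2 + E/2) by (simpl; field).
      rewrite F1, F2, F3, F4. split.
      + replace (Tu Rp u0 (Wlim Rp a u0) r - Tu Rp u0' (Wlim Rp a' u0') r) with
          ((Tu Rp u0 (Wlim Rp a u0) r - Tu Rp u0 (Wlim Rp a' u0') r) + (Tu Rp u0 (Wlim Rp a' u0') r - Tu Rp u0' (Wlim Rp a' u0') r)) by ring.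
        eapply Rle_trans; [apply Rabs_triang|]. lra.
      + replace (Tw Rp a (Ulim Rp a u0) (Wlim Rp a u0) r - Tw Rp a' (Ulim Rp a' u0') (Wlim Rp a' u0') r) with
          ((Tw Rp a (Ulim Rp a u0) (Wlim Rp a u0) r - Tw Rp a (Ulim Rp a' u0') (Wlim Rp a' u0') r) +
           (Tw Rp a (Ulim Rp a' u0') (Wlim Rp a' u0') r - Tw Rp a' (Ulim Rp a' u0') (Wlim Rp a' u0') r)) by ring.
        eapply Rle_trans; [apply Rabs_triang|]. lra. }
  intros r. split.
  - assert (Rabs (Ulim Rp a u0 r - Ulim Rp a' u0' r) - E <= 0); [|lra].
    apply (lim_half _ (D0 u00)). intros n. destruct (Hn n r). lra.
  - assert (Rabs (Wlim Rp a u0 r - Wlim Rp a' u0' r) - E <= 0); [|lra].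
    apply (lim_half _ (D0 u00)). intros n. destruct (Hn n r). lra.
Qed.

End Par.


Lemma w2_le z : Rabs z <= 1/2 -> z^2 <= 1/4.
Proof.
  intros H. assert (Rabs z ^2 <= (1/2)^2) by (apply pow_incr; split; [apply Rabs_pos|auto]).
  rewrite RPow_abs, Rabs_pos_eq in H0 by (apply pow2_ge_0). simpl in *. lra.
Qed.

Lemma phi_deriv z : Rabs z <= 1/2 -> is_derive phi z (/ Sq z ^ 3).
Proof.
  intros H. destruct (Sq_bounds z H) as [S1 S2]. pose proof (Sq_sq z ltac:(lra)) as E.
  pose proof (w2_le z H).
  unfold phi. unfold Sq in *. auto_derive.
  - replace (1 + - (z * (z * 1))) with (1 - z^2) by ring. split; [lra|split; auto; lra].
  - replace (1 + - (z * (z * 1))) with (1 - z^2) by ring.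
    set (S := sqrt (1 - z^2)) in *.
    field_simplify; [|lra|lra]. rewrite E. field. lra.
Qed.

Lemma sqrt_phi z : Rabs z <= 1/2 -> sqrt (1 + phi z ^ 2) = / Sq z.
Proof.
  intros H. destruct (Sq_bounds z H) as [S1 S2]. pose proof (Sq_sq z ltac:(lra)) as E.
  replace (1 + phi z ^ 2) with ((/ Sq z) ^ 2).
  - apply sqrt_pow2. left; apply Rinv_0_lt_compat; lra.
  - unfold phi. field_simplify; [|lra|lra]. rewrite E. f_equal. ring.
Qed.

Lemma phi_over z : Rabs z <= 1/2 -> phi z / sqrt (1 + phi z ^ 2) = z.
Proof.
  intros H. destruct (Sq_bounds z H) as [S1 S2]. rewrite sqrt_phi; auto.
  unfold phi. field. lra.
Qed.

Lemma lim_mult_within (D : R -> Prop) x (f g : R -> R) l1 l2 :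
  filterlim f (within D (locally x)) (locally l1) ->
  filterlim g (within D (locally x)) (locally l2) ->
  filterlim (fun y => f y * g y) (within D (locally x)) (locally (l1 * l2)).
Proof.
  intros Hf Hg.
  apply (filterlim_comp_2 f g Rmult Hf Hg). apply (@filterlim_mult R_AbsRing l1 l2).
Qed.

Lemma within_ext (D : R -> Prop) x (f g : R -> R) l :
  (forall y, D y -> f y = g y) ->
  filterlim f (within D (locally x)) (locally l) -> filterlim g (within D (locally x)) (locally l).
Proof.
  intros He. apply filterlim_ext_loc. exists (mkposreal 1 Rlt_0_1). intros y _ Dy. apply He; auto.
Qed.

Lemma cp_ext_loc (f g : R -> R) x d : 0 < d -> (forall y, Rabs (y - x) < d -> f y = g y) ->
  continuity_pt f x -> continuity_pt g x.
Proof.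
  intros Hd He Hc. apply eps_cont. intros eps Heps.
  destruct (cont_eps f x Hc eps Heps) as [d' [Hd' H]].
  exists (Rmin d d'). split. apply Rmin_pos; lra.
  intros y Hy. rewrite <- !He. apply H. eapply Rlt_le_trans; [exact Hy| apply Rmin_r].
  rewrite Rminus_diag, Rabs_R0; lra. eapply Rlt_le_trans; [exact Hy| apply Rmin_l].
Qed.

Lemma RInt_lin c y : RInt (fun s => s * c) 0 y = c * y^2 / 2.
Proof.
  assert (H : is_RInt (fun s => s * c) 0 y (minus (c * y^2/2) (c * 0^2/2))).
  { apply (@is_RInt_derive R_CompleteNormedModule (fun s => c * s^2/2)).
    + intros x _. auto_derive; auto. change (c * (1 * ((1 + 1) * (x * 1))) * / 2 = x * c). field.
    + intros x _. apply cont_coq. apply cp_mult. apply cp_id. apply cp_const. }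
  apply (@is_RInt_unique R_CompleteNormedModule) in H. rewrite H. unfold minus, plus, opp. simpl. field.
Qed.


Lemma loc_of (P : R -> Prop) x d : 0 < d -> (forall y, Rabs (y - x) < d -> P y) -> locally x P.
Proof. intros Hd H. exists (mkposreal d Hd). intros y Hy. apply H. exact Hy. Qed.

Lemma cp_pow f x n : continuity_pt f x -> continuity_pt (fun y => f y ^ n) x.
Proof.
  intros H. induction n as [|n IH]; simpl. apply cp_const. apply cp_mult; auto.
Qed.

Lemma lim_eq (F : (R -> Prop) -> Prop) (f : R -> R) l l' : l = l' -> filterlim f F (locally l) -> filterlim f F (locally l').
Proof. intros ->; auto. Qed.

Lemma tri_aux p q f e1 e2 : Rabs (p - q) < e1 -> Rabs (f - q/2) <= e2 -> Rabs (p - f - q/2) < e1 + e2.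
Proof. intros H1 H2. unfold Rabs in *. repeat destruct Rcase_abs; lra. Qed.

Definition hl a (u w : R -> R) s := hf a s (u s) (w s).
Definition Fi a u w y : R := RInt (fun s => s * hl a u w s) 0 y.
Definition W2 a u w y := if Rle_dec y 0 then hl a u w 0 / 2 else hl a u w y - Fi a u w y / y^2.
Definition U2f a u w y := W2 a u w y / Sq (w y) ^ 3.

Section Reg.
Variables (u00 A Rp a u0 : R) (u w : R -> R).
Hypotheses (Hu : 0 < u00) (HA : 0 <= A) (HR : 0 < Rp) (HR1 : Rp <= u00/4) (Ha : Rabs a <= A)
  (G : Good u00 u w) (F1 : forall r, u r = Tu Rp u0 w r) (F2 : forall r, w r = Tw Rp a u w r).

Lemma hl_cont s : continuity_pt (hl a u w) s.
Proof. destruct (G s) as [[B1 B2] [C1 C2]]. unfold hl. apply cp_hf; auto. lra. Qed.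

Lemma gl_cont s : continuity_pt (fun s => s * hl a u w s) s.
Proof. apply cp_mult. apply cp_id. apply hl_cont. Qed.

Lemma u_eq y : 0 <= y <= Rp -> u y = u0 + RInt (fun s => phi (w s)) 0 y.
Proof. intros H. rewrite F1. unfold Tu. rewrite Cl_id; auto. Qed.

Lemma w_eq y : 0 <= y <= Rp -> w y = / y * Fi a u w y.
Proof. intros H. rewrite F2. unfold Tw. rewrite Cl_id; auto. Qed.

Lemma w_0 : w 0 = 0.
Proof. rewrite w_eq by lra. rewrite Rinv_0. ring. Qed.

Lemma u_0 : u 0 = u0.
Proof. rewrite u_eq by lra. rewrite RInt_00. ring. Qed.

Lemma KE eps : 0 < eps -> exists d, 0 < d /\ forall y, 0 < y -> y < d ->
  Rabs (Fi a u w y / y^2 - hl a u w 0 / 2) <= eps.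
Proof.
  intros He. destruct (cont_eps _ 0 (hl_cont 0) eps He) as [d [Hd H]].
  exists d. split; auto. intros y Hy Hyd.
  assert (E : Fi a u w y - hl a u w 0 * y^2/2 = RInt (fun s => s * hl a u w s - s * hl a u w 0) 0 y).
  { unfold Fi. rewrite <- RInt_lin. apply RInt_sub. apply gl_cont. intros; apply cp_mult; [apply cp_id|apply cp_const]. }
  assert (B : Rabs (Fi a u w y - hl a u w 0 * y^2/2) <= y * (y * eps)).
  { rewrite E. apply int_bound; [lra| |].
    - intros s. apply cp_minus. apply gl_cont. apply cp_mult; [apply cp_id|apply cp_const].
    - intros s Hs. rewrite <- Rmult_minus_distr_l, Rabs_mult, Rabs_pos_eq by lra.
      apply Rmult_le_compat; try lra. apply Rabs_pos.
      left. apply H. rewrite Rminus_0_r, Rabs_pos_eq; lra. }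
  replace (Fi a u w y / y^2 - hl a u w 0 / 2) with ((Fi a u w y - hl a u w 0 * y^2/2) * / y^2) by (field; lra).
  rewrite Rabs_mult, (Rabs_pos_eq (/ y^2)) by (left; apply Rinv_0_lt_compat, pow_lt; lra).
  apply Rmult_le_compat_r with (r := / y^2) in B; [|left; apply Rinv_0_lt_compat, pow_lt; lra].
  replace (y * (y * eps) * / y ^ 2) with eps in B by (field; lra). exact B.
Qed.

Lemma deriv_w_pos x : 0 < x < Rp -> is_derive w x (W2 a u w x).
Proof.
  intros Hx.
  assert (D1 : is_derive (fun y : R => / y) x (- 1 / x^2)).
  { auto_derive. lra. field. lra. }
  assert (D2 : is_derive (Fi a u w) x (x * hl a u w x)).
  { unfold Fi. apply (RInt_cont (fun s => s * hl a u w s)). apply gl_cont. }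
  pose proof (is_derive_mult _ _ x _ _ D1 D2 Rmult_comm) as D.
  apply (is_derive_ext_loc (fun y => / y * Fi a u w y)).
  - apply (loc_of _ x (Rmin x (Rp - x))). apply Rmin_pos; lra.
    intros y Hy. assert (Rabs (y - x) < x) by (eapply Rlt_le_trans; [exact Hy|apply Rmin_l]).
    assert (Rabs (y - x) < Rp - x) by (eapply Rlt_le_trans; [exact Hy|apply Rmin_r]).
    rewrite w_eq; auto. apply Rabs_def2 in H. apply Rabs_def2 in H0. lra.
  - unfold W2. destruct (Rle_dec x 0); [lra|].
    replace (hl a u w x - Fi a u w x / x ^ 2) with (plus (mult (-1 / x^2) (Fi a u w x)) (mult (/ x) (x * hl a u w x))).
    exact D. unfold plus, mult; simpl. field. lra.
Qed.

Lemma deriv_U1_pos x : 0 < x < Rp -> is_derive (fun y => phi (w y)) x (U2f a u w x).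
Proof.
  intros Hx. pose proof (is_derive_comp phi w x _ _ (phi_deriv (w x) (proj2 (proj1 (G x)))) (deriv_w_pos x Hx)).
  unfold U2f. unfold scal in H; simpl in H. unfold mult in H; simpl in H. exact H.
Qed.

Lemma W2_0 : W2 a u w 0 = hl a u w 0 / 2.
Proof. unfold W2. destruct (Rle_dec 0 0); [auto|lra]. Qed.

Lemma lim_w0 (D : R -> Prop) : (forall y, D y -> 0 <= y) ->
  filterlim (fun y => (w y - w 0) / (y - 0)) (within (fun y => D y /\ y <> 0) (locally 0)) (locally (W2 a u w 0)).
Proof.
  intros HD. rewrite W2_0. apply within_eps. intros eps He.
  destruct (KE (eps/2) ltac:(lra)) as [d [Hd H]].
  exists (Rmin d Rp). split. apply Rmin_pos; lra.
  intros y [Dy Hy0] Hyd. pose proof (HD y Dy).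
  rewrite Rminus_0_r, Rabs_pos_eq in Hyd by lra.
  assert (y < d) by (eapply Rlt_le_trans; [exact Hyd|apply Rmin_l]).
  assert (y < Rp) by (eapply Rlt_le_trans; [exact Hyd|apply Rmin_r]).
  rewrite w_0, w_eq by lra. replace ((/ y * Fi a u w y - 0) / (y - 0)) with (Fi a u w y / y^2) by (field; lra).
  eapply Rle_lt_trans. apply H; lra. lra.
Qed.

Lemma W2_lim0 (D : R -> Prop) : (forall y, D y -> 0 <= y) ->
  filterlim (W2 a u w) (within D (locally 0)) (locally (W2 a u w 0)).
Proof.
  intros HD. rewrite W2_0. apply within_eps. intros eps He.
  destruct (KE (eps/4) ltac:(lra)) as [d [Hd H]].
  destruct (cont_eps _ 0 (hl_cont 0) (eps/2) ltac:(lra)) as [d' [Hd' H']].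
  exists (Rmin d d'). split. apply Rmin_pos; lra.
  intros y Dy Hyd. pose proof (HD y Dy).
  assert (Rabs (y - 0) < d) by (eapply Rlt_le_trans; [exact Hyd|apply Rmin_l]).
  assert (Rabs (y - 0) < d') by (eapply Rlt_le_trans; [exact Hyd|apply Rmin_r]).
  unfold W2. destruct (Rle_dec y 0).
  - rewrite Rminus_diag, Rabs_R0. lra.
  - rewrite Rminus_0_r, Rabs_pos_eq in H1 by lra.
    pose proof (H y ltac:(lra) H1). pose proof (H' y H2).


    apply Rlt_le_trans with (eps/2 + eps/4); [|lra]. apply tri_aux; auto.
Qed.

Lemma W2_cont_pos x : 0 < x -> continuity_pt (W2 a u w) x.
Proof.
  intros Hx. apply (cp_ext_loc (fun y => hl a u w y - Fi a u w y / y^2) _ x x); auto.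
  - intros y Hy. unfold W2. destruct (Rle_dec y 0); auto. unfold Rabs in Hy; destruct Rcase_abs in Hy; lra.
  - apply cp_minus. apply hl_cont. apply cp_div. apply RInt_cont_pt. apply gl_cont.
    apply cp_sq, cp_id. apply pow_nonzero. lra.
Qed.

Lemma cont_iSq3 x : continuity_pt (fun y => / Sq (w y) ^ 3) x.
Proof.
  destruct (G x) as [[B1 B2] [C1 C2]]. destruct (Sq_bounds _ B2).
  apply cp_inv. apply cp_pow. apply cp_Sq; auto. apply pow_nonzero. lra.
Qed.

Lemma U2_cont_pos x : 0 < x -> continuity_pt (U2f a u w) x.
Proof.
  intros Hx. unfold U2f. apply cp_mult. apply W2_cont_pos; auto. apply cont_iSq3.
Qed.

Lemma Sq0 : Sq 0 = 1.
Proof. unfold Sq. replace (1 - 0^2) with 1 by ring. apply sqrt_1. Qed.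

Let Rr := Rp / 2.

Lemma C2_reg : C2_on 0 Rr u (fun y => phi (w y)) (U2f a u w).
Proof.
  split; [|split].
  - intros x Hx.
    assert (Hd : is_derive (fun y => u0 + RInt (fun s => phi (w s)) 0 y) x (phi (w x))).
    { eapply is_derive_ext. intros t. reflexivity.
      pose proof (RInt_cont (fun s => phi (w s)) x (cont_phiw u00 u w G)).
      pose proof (is_derive_const u0 x) as Hc.
      pose proof (is_derive_plus _ _ x _ _ Hc H) as Hp.
      unfold plus, zero in Hp; simpl in Hp. rewrite Rplus_0_l in Hp. exact Hp. }
    pose proof (deriv_within (fun y => 0 <= y <= Rr) _ x _ Hd) as L.
    eapply within_ext; [|exact L]. intros y [Dy _]. simpl.
    rewrite (u_eq y), (u_eq x); unfold Rr in *; auto; lra.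
  - intros x Hx. destruct (Req_dec x 0) as [->|Hne].
    + pose proof (lim_w0 (fun y => 0 <= y <= Rr) ltac:(intros y Hy; lra)) as L1.
      pose proof (cont_within (fun y => 0 <= y <= Rr /\ y <> 0) (fun y => / Sq (w y)) 0) as L2.
      assert (continuity_pt (fun y => / Sq (w y)) 0).
      { destruct (G 0) as [[B1 B2] [C1 C2]]. destruct (Sq_bounds _ B2).
        apply cp_inv. apply cp_Sq; auto. lra. }
      specialize (L2 H). pose proof (lim_mult_within _ _ _ _ _ _ L1 L2) as L.
      assert (E : W2 a u w 0 * / Sq (w 0) = U2f a u w 0).
      { unfold U2f. rewrite w_0, Sq0. field. }
      rewrite E in L.
      eapply within_ext; [|exact L].
      intros y [Dy Hy]. simpl. rewrite w_0. unfold phi at 2. rewrite Sq0. unfold phi. field.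
      split; auto. destruct (G y) as [[B1 B2] _]. destruct (Sq_bounds _ B2). lra.
    + apply (deriv_within _ (fun y => phi (w y)) x). apply deriv_U1_pos. unfold Rr in *; lra.
  - intros x Hx. destruct (Req_dec x 0) as [->|Hne].
    + pose proof (W2_lim0 (fun y => 0 <= y <= Rr) ltac:(intros y Hy; lra)) as L1.
      pose proof (cont_within (fun y => 0 <= y <= Rr) _ 0 (cont_iSq3 0)) as L2.
      exact (lim_mult_within _ _ _ _ _ _ L1 L2).
    + apply cont_within. apply U2_cont_pos. lra.
Qed.

Lemma ode_reg : solves_ode a Rr u (fun y => phi (w y)).
Proof.
  intros r Hr. unfold Rr in Hr.
  assert (Hd : is_derive (Fi a u w) r (r * hl a u w r)).
  { unfold Fi. apply (RInt_cont (fun s => s * hl a u w s)). apply gl_cont. }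
  eapply is_derive_ext_loc; [|eapply is_derive_ext; [intros t; reflexivity|]].
  2: { replace (rhs a r (u r) (phi (w r))) with (r * hl a u w r). exact Hd.
       destruct (G r) as [[B1 B2] _]. destruct (Sq_bounds _ B2).
       unfold rhs. rewrite sqrt_phi by auto. unfold hl, hf, phi.
       assert (0 < r^2 + u r^2) by (pose proof (pow2_ge_0 r); assert (0 < u r ^2) by (apply pow_lt; lra); lra).
       field. split; lra. }
  apply (loc_of _ r (Rmin r (Rp - r))). apply Rmin_pos; lra.
  intros y Hy. assert (Rabs (y - r) < r) by (eapply Rlt_le_trans; [exact Hy|apply Rmin_l]).
  assert (Rabs (y - r) < Rp - r) by (eapply Rlt_le_trans; [exact Hy|apply Rmin_r]).
  assert (0 < y < Rp) by (apply Rabs_def2 in H; apply Rabs_def2 in H0; lra).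
  unfold Rdiv. rewrite Rmult_assoc. fold (Rdiv (phi (w y)) (sqrt (1 + phi (w y) ^ 2))).
  rewrite phi_over by (apply (G y)). rewrite (w_eq y) by lra. rewrite <- Rmult_assoc, Rinv_r, Rmult_1_l; [reflexivity|lra].
Qed.

End Reg.


Lemma joint (P : R -> R -> Prop) Rr (V : R -> R -> R -> R) K : 0 < K ->
  (forall a c, P a c -> forall r, continuity_pt (V a c) r) ->
  (forall a c a' c' r, P a c -> P a' c' -> Rabs (V a' c' r - V a c r) <= K * (Rabs (c' - c) + Rabs (a' - a))) ->
  jointly_continuous_on P Rr V.
Proof.
  intros HK Hc Hp a c r Pac Hr eps He.
  destruct (cont_eps _ r (Hc a c Pac r) (eps/2) ltac:(lra)) as [d1 [Hd1 H1]].
  exists (Rmin d1 (eps / (4 * K))). split. apply Rmin_pos; auto. apply Rdiv_lt_0_compat; lra.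
  intros a' c' r' Pac' Hr' Ha Hc' Hr''.
  assert (Rabs (a' - a) < eps / (4*K)) by (eapply Rlt_le_trans; [exact Ha|apply Rmin_r]).
  assert (Rabs (c' - c) < eps / (4*K)) by (eapply Rlt_le_trans; [exact Hc'|apply Rmin_r]).
  assert (Rabs (r' - r) < d1) by (eapply Rlt_le_trans; [exact Hr''|apply Rmin_l]).
  specialize (H1 r' H2). specialize (Hp a c a' c' r' Pac Pac').
  assert (K * (Rabs (c' - c) + Rabs (a' - a)) < eps/2).
  { apply Rlt_le_trans with (K * (eps / (4 * K) + eps / (4 * K))).
    apply Rmult_lt_compat_l; lra. right; field; lra. }
  replace (V a' c' r' - V a c r) with ((V a' c' r' - V a c r') + (V a c r' - V a c r)) by ring.
  eapply Rle_lt_trans; [apply Rabs_triang|]. lra.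
Qed.

Theorem mainTheorem9 :
  forall alpha0 u00 : R, 0 < u00 ->
  exists (Rr delta : R) (U U1 U2 : R -> R -> R -> R),
    0 < Rr /\ 0 < delta /\
    (forall alpha u0, Rabs (alpha - alpha0) < delta -> Rabs (u0 - u00) < delta ->
       0 < u0 /\
       C2_on 0 Rr (U alpha u0) (U1 alpha u0) (U2 alpha u0) /\
       solves_ode alpha Rr (U alpha u0) (U1 alpha u0) /\
       U alpha u0 0 = u0 /\ U1 alpha u0 0 = 0) /\
    jointly_continuous_on
      (fun alpha u0 => Rabs (alpha - alpha0) < delta /\ Rabs (u0 - u00) < delta)
      Rr U /\
    jointly_continuous_on
      (fun alpha u0 => Rabs (alpha - alpha0) < delta /\ Rabs (u0 - u00) < delta)
      Rr U1.
Proof.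
  intros alpha0 u00 Hu.
  set (A := Rabs alpha0 + 1).
  assert (HA : 0 <= A) by (unfold A; pose proof (Rabs_pos alpha0); lra).
  pose proof (Hc_pos u00 Hu) as HH. pose proof (Lc_pos u00 Hu) as HL.
  set (K := A * Hc u00 + 3 + A * Lc u00).
  assert (HK : 0 < K) by (unfold K; nra).
  set (Rp := Rmin (u00/4) (/ (2 * K))).
  assert (HR : 0 < Rp) by (apply Rmin_pos; [lra| apply Rinv_0_lt_compat; lra]).
  assert (HR1 : Rp <= u00/4) by apply Rmin_l.
  assert (HRK : Rp * K <= 1/2).
  { apply Rle_trans with (/ (2 * K) * K). apply Rmult_le_compat_r; [lra|apply Rmin_r].
    right; field; lra. }
  assert (HR2 : Rp * (A * Hc u00) <= 1/2).
  { assert (0 <= A * Lc u00) by nra. assert (Rp * (A * Hc u00) <= Rp * K) by (apply Rmult_le_compat_l; unfold K; lra). lra. }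
  assert (HR3 : Rp * (3 + A * Lc u00) <= 1/2).
  { assert (0 <= A * Hc u00) by nra. assert (Rp * (3 + A * Lc u00) <= Rp * K) by (apply Rmult_le_compat_l; unfold K; lra). lra. }
  set (delta := Rmin 1 (u00/4)).
  assert (Hd : 0 < delta) by (apply Rmin_pos; lra).
  assert (HPA : forall a c, Rabs (a - alpha0) < delta -> Rabs (c - u00) < delta -> PA u00 A a c).
  { intros a c Ha Hcc. split.
    - assert (Rabs (a - alpha0) < 1) by (eapply Rlt_le_trans; [exact Ha|apply Rmin_l]).
      unfold A. pose proof (Rabs_triang (a - alpha0) alpha0). replace (a - alpha0 + alpha0) with a in H0 by ring. lra.
    - assert (Rabs (c - u00) < u00/4) by (eapply Rlt_le_trans; [exact Hcc|apply Rmin_r]). lra. }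
  exists (Rp / 2), delta, (fun a c r => Ulim Rp a c r), (fun a c r => phi (Wlim Rp a c r)),
    (fun a c r => U2f a (Ulim Rp a c) (Wlim Rp a c) r).
  split; [lra|]. split; [lra|]. split; [|split].
  - intros a c Ha Hcc. pose proof (HPA a c Ha Hcc) as P. destruct P as [Pa Pc].
    pose proof (lim_good u00 A Rp Hu HA HR HR1 HR2 HR3 a c (HPA a c Ha Hcc)) as G.
    assert (F1 : forall r, Ulim Rp a c r = Tu Rp c (Wlim Rp a c) r) by (intros r; apply (lim_fixed u00 A Rp Hu HA HR HR1 HR2 HR3 a c (HPA a c Ha Hcc) r)).
    assert (F2 : forall r, Wlim Rp a c r = Tw Rp a (Ulim Rp a c) (Wlim Rp a c) r) by (intros r; apply (lim_fixed u00 A Rp Hu HA HR HR1 HR2 HR3 a c (HPA a c Ha Hcc) r)).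
    split; [|split; [|split; [|split]]].
    + unfold Rabs in Pc; destruct Rcase_abs in Pc; lra.
    + apply (C2_reg u00 Rp a c _ _ HR HR1 G F1 F2).
    + apply (ode_reg u00 Rp a _ _ HR HR1 G F2).
    + apply (u_0 Rp c _ _ HR F1).
    + simpl. rewrite (w_0 Rp a _ _ HR F2). unfold phi. rewrite Sq0. field.
  - apply (joint _ _ _ (2 * (1 + Rp * Hc u00))). nra.
    + intros a c [Ha Hcc] r. apply (lim_good u00 A Rp Hu HA HR HR1 HR2 HR3 a c (HPA a c Ha Hcc) r).
    + intros a c a' c' r [Ha Hcc] [Ha' Hcc'].
      destruct (par_dep u00 A Rp Hu HA HR HR1 HR2 HR3 a' c' a c (HPA a' c' Ha' Hcc') (HPA a c Ha Hcc) r) as [E _].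
      pose proof (Rabs_pos (c' - c)). pose proof (Rabs_pos (a' - a)).
      assert (0 <= Rp * Hc u00 * Rabs (c' - c)) by (apply Rmult_le_pos; [apply Rmult_le_pos|]; lra).
      replace (2 * (1 + Rp * Hc u00) * (Rabs (c' - c) + Rabs (a' - a))) with
        (2 * (Rabs (c' - c) + Rp * (Rabs (a' - a) * Hc u00)) + 2 * Rabs (a' - a) + 2 * (Rp * Hc u00 * Rabs (c' - c))) by ring.
      lra.
  - apply (joint _ _ _ (3 * (2 * (1 + Rp * Hc u00)))). nra.
    + intros a c [Ha Hcc] r. destruct (lim_good u00 A Rp Hu HA HR HR1 HR2 HR3 a c (HPA a c Ha Hcc) r) as [[_ B] [_ C]].
      apply cp_phi; auto.
    + intros a c a' c' r [Ha Hcc] [Ha' Hcc'].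
      destruct (par_dep u00 A Rp Hu HA HR HR1 HR2 HR3 a' c' a c (HPA a' c' Ha' Hcc') (HPA a c Ha Hcc) r) as [_ E].
      pose proof (lim_good u00 A Rp Hu HA HR HR1 HR2 HR3 a c (HPA a c Ha Hcc) r) as [[_ B] _].
      pose proof (lim_good u00 A Rp Hu HA HR HR1 HR2 HR3 a' c' (HPA a' c' Ha' Hcc') r) as [[_ B'] _].
      pose proof (phi_lip _ _ B' B).
      pose proof (Rabs_pos (c' - c)). pose proof (Rabs_pos (a' - a)).
      assert (0 <= Rp * Hc u00 * Rabs (c' - c)) by (apply Rmult_le_pos; [apply Rmult_le_pos|]; lra).
      simpl. eapply Rle_trans; [exact H|].
      replace (3 * (2 * (1 + Rp * Hc u00)) * (Rabs (c' - c) + Rabs (a' - a))) with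
        (3 * (2 * (Rabs (c' - c) + Rp * (Rabs (a' - a) * Hc u00)) + 2 * Rabs (a' - a) + 2 * (Rp * Hc u00 * Rabs (c' - c)))) by ring.
      lra.
Qed.
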